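(* Let $X$ be a topological vector space, $Z$ a locally convex topological vector space, $C\subseteq Z$ a nonempty closed convex cone with $C^-\neq\{0\}$, and $f:X\to\mathcal{F}(Z,C)$. If $f(x_0)$ is a convex set and $\varphi_{(f,z^* )}$ is lower semicontinuous at $x_0$ for every $z^*\in C^-\setminus\{0\}$, then $f$ is lower lattice-semicontinuous at $x_0$.
   Context: $\mathcal{F}(Z,C)=\{A\subseteq Z\colon A=\operatorname{cl}(A+C)\}$ (empty set included); $C^-=\{z^*\in Z^*\colon z^*(z)\le0\ \forall z\in C\}$. $\varphi_{(f,z^* )}(x)=\inf_{z\in f(x)}(-z^*(z))$, with $\inf\emptyset=+\infty$. $f$ is lower lattice-semicontinuous at $x_0$ iff $f(x_0)\supseteq\bigcap_{U\in\mathcal{N}(x_0)}\operatorname{cl}\bigcup_{x\in U}f(x)$ ($\mathcal{N}(x_0)$ the neighborhoods of $x_0$); equivalently, for every $z_0\notin f(x_0)$ there exist a neighborhood $U$ of $x_0$ and a neighborhood $V$ of $z_0$ with $z\notin f(x)$ for all $x\in U$, $z\in V$. *)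

(* Defs.v *)
From HB Require Import structures.
From mathcomp Require Import all_boot all_order all_algebra.
From mathcomp Require Import all_classical all_reals all_analysis.
Set Implicit Arguments. Unset Strict Implicit. Unset Printing Implicit Defensive.
Import Order.TTheory GRing.Theory Num.Theory.
Local Open Scope classical_set_scope.
Local Open Scope ring_scope.

Section defs.
Context {R : realType}.

Definition msum {Z : lmodType R} (A B : set Z) : set Z :=
  [set a + b | a in A & b in B].

Definition closed_convex_cone {Z : tvsType R} (C : set Z) : Prop :=
  closed C /\ convex_set C /\ (forall (t : R) z, 0 <= t -> C z -> C (t *: z)).

Definition in_dual {Z : tvsType R} (g : Z -> R) : Prop :=
  (forall (a : R) (x y : Z), g (a *: x + y) = a * g x + g y) /\
  continuous (g : Z -> R^o).

Definition polar_cone {Z : tvsType R} (C : set Z) (g : Z -> R) : Prop :=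
  in_dual g /\ (forall z, C z -> g z <= 0).

Definition in_FZC {Z : tvsType R} (C : set Z) (A : set Z) : Prop :=
  A = closure (msum A C).

(* phi_(f,g)(x) = inf_{z in f x} (- g(z)),  inf of empty set = +oo *)
Definition phi {X : Type} {Z : tvsType R} (f : X -> set Z) (g : Z -> R)
  (x : X) : \bar R :=
  ereal_inf [set ((- g z)%:E) | z in f x].

(* lower semicontinuity at a point of an extended-real function
   (pointwise version of mathcomp's lower_semicontinuous) *)
Definition lsc_at {X : topologicalType} (h : X -> \bar R) (x0 : X) : Prop :=
  forall a : R, (a%:E < h x0)%E ->
    exists2 V, nbhs x0 V & forall y, V y -> (a%:E < h y)%E.

End defs.

Definition lower_lattice_sc_at {X Z : topologicalType}
  (f : X -> set Z) (x0 : X) : Prop :=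
  \bigcap_(U in nbhs x0) closure (\bigcup_(x in U) f x) `<=` f x0.

(* Main.v *)
Require Import Defs.
From HB Require Import structures.
From mathcomp Require Import all_boot all_order all_algebra.
From mathcomp Require Import all_classical all_reals all_analysis.
From mathcomp Require Import ring lra.
Import Order.TTheory GRing.Theory Num.Theory.
Local Open Scope classical_set_scope.
Local Open Scope ring_scope.
Set Implicit Arguments. Unset Strict Implicit.

Definition hb_valid {R : realType} {E : lmodType R} (p : E -> R) (x0 : E) (c0 : R)
  (G : set (E * R)) : Prop :=
  [/\ G (x0, c0),
      (forall a x r y s, G (x, r) -> G (y, s) -> G (a *: x + y, a * r + s)),
      (forall x r s, G (x, r) -> G (x, s) -> r = s) &
      (forall x r, G (x, r) -> r <= p x)].

Lemma hb_zero {R : realType} {E : lmodType R} (p : E -> R) x0 c0 G :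
  hb_valid p x0 c0 G -> G (0, 0).
Proof.
case=> G0 Gc _ _; have := Gc (-1) _ _ _ _ G0 G0.
by rewrite scaleN1r mulN1r !addNr.
Qed.

Lemma hb_scale {R : realType} {E : lmodType R} (p : E -> R) x0 c0 G a x r :
  hb_valid p x0 c0 G -> G (x, r) -> G (a *: x, a * r).
Proof.
move=> hv Gx; have := (let: And4 _ Gc _ _ := hv in Gc) a _ _ _ _ Gx (hb_zero hv).
by rewrite !addr0.
Qed.

Lemma hb_step {R : realType} {E : lmodType R} (p : E -> R) x0 c0 G x1 :
  (forall x y, p (x + y) <= p x + p y) ->
  (forall s x, 0 < s -> p (s *: x) <= s * p x) ->
  hb_valid p x0 c0 G -> (forall r, ~ G (x1, r)) ->
  exists G', hb_valid p x0 c0 G' /\ G `<` G'.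
Proof.
move=> psub phom hv nG.
have [G0 Gc Gf Gp] := hv.
have G00 := hb_zero hv.
pose S := [set y | exists m r, G (m, r) /\ y = r - p (m - x1)].
have Sne : S !=set0 by exists (0 - p (0 - x1)), 0, 0.
have Sub m' r' : G (m', r') -> ubound S (p (m' + x1) - r').
  move=> Gm' _ [m [r [Gm ->]]].
  rewrite lerBrDr addrAC lerBlDr.
  have := Gp _ _ (Gc 1 _ _ _ _ Gm Gm'); rewrite scale1r mul1r => /le_trans; apply.
  have -> : m + m' = (m - x1) + (m' + x1) by rewrite addrACA addNr addr0.
  by rewrite [X in _ <= X]addrC; exact: psub.
pose c := sup S.
have cle m r : G (m, r) -> c <= p (m + x1) - r.
  by move=> Gm; apply: ge_sup => //; exact: Sub.
have gec m r : G (m, r) -> r - p (m - x1) <= c.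
  move=> Gm; have hu : has_ubound S by exists (p (0 + x1) - 0); exact: Sub.
  by apply: (ub_le_sup hu); exists m, r.
pose G' := [set z | exists m r t, G (m, r) /\ z = (m + t *: x1, r + t * c)].
exists G'; split; last first; rewrite /proper /subset.
  split; first by move=> [m r] /= Gm; exists m, r, 0; rewrite scale0r mul0r !addr0.
  move=> /(_ (x1, c)) H; apply: (nG c); apply: H.
  by exists 0, 0, 1; rewrite scale1r mul1r !add0r.
split.
- by exists x0, c0, 0; rewrite scale0r mul0r !addr0.
- move=> a _ _ _ _ [m [r [t [Gm [-> ->]]]]] [m' [r' [t' [Gm' [-> ->]]]]].
  exists (a *: m + m'), (a * r + r'), (a * t + t'); split; first exact: Gc.
  congr (_, _).
    by rewrite scalerDl scalerDr -scalerA addrACA.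
  by rewrite mulrDl mulrDr mulrA addrACA.
- move=> _ _ _ [m [r [t [Gm [-> ->]]]]] [m' [r' [t' [Gm' [e ->]]]]].
  have [tt|tt] := eqVneq t t'.
    subst t'; move: e; move/addIr => mm; subst m'.
    by rewrite (Gf _ _ _ Gm Gm').
  exfalso; apply: (nG (((t - t')^-1) * (- r + r'))).
  have -> : x1 = (t - t')^-1 *: ((-1) *: m + m').
    apply: (@scalerI _ _ (t - t')); first by rewrite subr_eq0.
    rewrite scalerA divff ?subr_eq0 // scale1r scaleN1r scalerBl.
    by apply: (addrI m); rewrite addrA e addrK addNKr.
  apply: hb_scale hv _; have := Gc (-1) _ _ _ _ Gm Gm'.
  by rewrite mulN1r.
- move=> _ _ [m [r [t [Gm [-> ->]]]]].
  have [t0|t0|->] := ltgtP t 0; last by rewrite scale0r mul0r !addr0; exact: Gp.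
  + pose s := - t; have s0 : 0 < s by rewrite oppr_gt0.
    have := gec _ _ (hb_scale s^-1 hv Gm).
    rewrite lerBlDr => h.
    have : s * (s^-1 * r) <= s * (c + p (s^-1 *: m - x1)).
      by rewrite ler_pM2l.
    rewrite mulrA divff ?gt_eqF // mul1r mulrDr => h2.
    have h3 : s * p (s^-1 *: m - x1) <= p (m + t *: x1).
      have -> : s^-1 *: m - x1 = s^-1 *: (m + t *: x1).
        rewrite scalerDr scalerA.
        have -> : s^-1 * t = -1 by rewrite /s invrN mulNr mulVf ?ltr0_neq0.
        by rewrite scaleN1r.
      rewrite -ler_pdivlMl //.
      by apply: phom; rewrite invr_gt0.
    rewrite /s !mulNr in h2 h3; lra.
  + have := cle _ _ (hb_scale t^-1 hv Gm).
    rewrite lerBrDr => h.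
    have : t * (c + t^-1 * r) <= t * p (t^-1 *: m + x1) by rewrite ler_pM2l.
    rewrite mulrDr mulrA divff ?gt_eqF // mul1r => h2.
    have h3 : t * p (t^-1 *: m + x1) <= p (m + t *: x1).
      have -> : t^-1 *: m + x1 = t^-1 *: (m + t *: x1).
        by rewrite scalerDr scalerA mulVf ?gt_eqF // scale1r.
      rewrite -ler_pdivlMl //.
      by apply: phom; rewrite invr_gt0.
    rewrite mulrC in h2; lra.
Qed.

Lemma hahn_banach {R : realType} {E : lmodType R} (p : E -> R) (x0 : E) (c0 : R) :
  (forall x y, p (x + y) <= p x + p y) ->
  (forall s x, 0 < s -> p (s *: x) <= s * p x) ->
  x0 != 0 -> (forall t, t * c0 <= p (t *: x0)) ->
  exists g : E -> R, [/\ (forall a x y, g (a *: x + y) = a * g x + g y),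
    (forall x, g x <= p x) & g x0 = c0].
Proof.
move=> psub phom x00 seed.
pose P := fun G : set (E * R) => G = set0 \/ hb_valid p x0 c0 G.
have [A [PA Amax]] : exists A, P A /\ forall B, A `<` B -> ~ P B.
  apply: Zorn_bigcup => F FP Ftot.
  have [[G0 [FG0 [z G0z]]]|nn] := pselect (exists G, F G /\ G !=set0); last first.
    left; apply/seteqP; split => w // [G FG Gw]; apply: nn; exists G; split => //.
    by exists w.
  have vF G w : F G -> G w -> hb_valid p x0 c0 G.
    move=> FG Gw; case: (FP G FG) => // eG; by rewrite eG in Gw.
  right; split.
  - by exists G0 => //; case: (vF _ _ FG0 G0z).
  - move=> a x r y s [G1 FG1 G1x] [G2 FG2 G2y].
    have [h|h] := Ftot _ _ FG1 FG2.
      exists G2 => //; have [_ Gc _ _] := vF _ _ FG2 G2y; exact: Gc (h _ G1x) G2y.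
    exists G1 => //; have [_ Gc _ _] := vF _ _ FG1 G1x; exact: Gc G1x (h _ G2y).
  - move=> x r s [G1 FG1 G1x] [G2 FG2 G2y].
    have [h|h] := Ftot _ _ FG1 FG2.
      have [_ _ Gf _] := vF _ _ FG2 G2y; exact: Gf (h _ G1x) G2y.
    have [_ _ Gf _] := vF _ _ FG1 G1x; exact: Gf G1x (h _ G2y).
  - move=> x r [G1 FG1 G1x]; have [_ _ _ Gp] := vF _ _ FG1 G1x; exact: Gp G1x.
pose L := [set z : E * R | exists t, z = (t *: x0, t * c0)].
have vL : hb_valid p x0 c0 L.
  split.
  - by exists 1; rewrite scale1r mul1r.
  - move=> a _ _ _ _ [t [-> ->]] [t' [-> ->]]; exists (a * t + t').
    by rewrite scalerDl scalerA mulrDl mulrA.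
  - move=> _ _ _ [t [-> ->]] [t' [e ->]].
    have : (t - t') *: x0 = 0 by rewrite scalerBl e subrr.
    move/eqP; rewrite scaler_eq0 subr_eq0 (negbTE x00) orbF => /eqP ->.
    done.
  - by move=> _ _ [t [-> ->]]; exact: seed.
have vA : hb_valid p x0 c0 A.
  case: PA => // A0; exfalso; apply: (Amax L); last by right.
  rewrite A0; split; first by [].
  move=> /(_ (x0, c0)) H; have : (set0 : set (E * R)) (x0, c0).
    by apply: H; exists 1; rewrite scale1r mul1r.
  by [].
have full x : exists r, A (x, r).
  apply: contrapT => nx.
  have [G' [vG' AG']] := hb_step psub phom vA (fun r Ax => nx (ex_intro _ r Ax)).
  by apply: (Amax G'); last by right.
pose g x := xget 0 [set r | A (x, r)].
have gP x : A (x, g x) by apply: (xgetPex 0 (full x)).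
have [A0 Ac Af Ap] := vA.
exists g; split.
- by move=> a x y; apply: Af (gP _) (Ac a _ _ _ _ (gP x) (gP y)).
- by move=> x; exact: Ap (gP x).
- exact: Af (gP x0) A0.
Qed.
Lemma cvx_comb {R : realType} {M : lmodType R} (S : set M) l x y :
  convex_set S -> 0 <= l -> l <= 1 -> S x -> S y -> S (l *: x + (1 - l) *: y).
Proof.
move=> cS l0 l1 Sx Sy.
have := cS x y (@Itv01 R l l0 l1) (mem_set Sx) (mem_set Sy).
by rewrite inE.
Qed.

Lemma convex_nbhs_out {R : realType} {Z : tvsType R} (A : set Z) (z0 : Z) :
  closed A -> ~ A z0 ->
  exists B : set Z, [/\ convex_set B, nbhs z0 B & forall b, B b -> ~ A b].
Proof.
move=> cA nAz.
have [Bs Bcvx [Bop Bcvg]] := @locally_convex R Z.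
have nC : nbhs z0 (~` A) by apply: open_nbhs_nbhs; split => //; exact: closed_openC.
have [U [BU Uz] UA] := Bcvg z0 _ nC.
exists U; split.
- by apply: Bcvx; rewrite inE.
- by apply: open_nbhs_nbhs; split => //; exact: Bop.
- by move=> b Ub; exact: UA.
Qed.

Lemma nbhs_sym_shift {R : realType} {Z : tvsType R} (B : set Z) (z0 : Z) :
  nbhs z0 B -> nbhs (0 : Z) [set v | B (z0 + v) /\ B (z0 - v)].
Proof.
move=> Bz.
have V1 : nbhs (0 : Z) [set v | B (z0 + v)].
  have := nbhsB (-z0) Bz; rewrite addNr; apply: filterS.
  by move=> _ [b Bb <-] /=; rewrite addNKr.
have V2 : nbhs (0 : Z) [set v | B (z0 - v)].
  by apply: filterS (nbhs0N V1) => _ [u Bu <-] /=; rewrite opprK.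
exact: filterI.
Qed.

Lemma absorb_B {R : realType} {Z : tvsType R} (B : set Z) (z0 : Z) (x : Z) :
  nbhs z0 B -> exists2 s : R, 0 < s & B (z0 - s *: x).
Proof.
move=> Bz; have W := nbhs_sym_shift Bz.
have /= := @scale_continuous R Z (0, x) [set v | B (z0 + v) /\ B (z0 - v)].
rewrite scale0r => /(_ W) [[P1 P2]] /= [P10 P2x] PU.
have [e e0 Pe] := (nbhs_norm0P (V:=R^o)).1 P10.
exists (e / 2); first by rewrite divr_gt0.
have : P1 (e / 2).
  apply: Pe => /=; rewrite ger0_norm ?divr_ge0 ?ltW //.
  by rewrite ltr_pdivrMr // ltr_pMr // ltr1n.
move=> P1e; have := PU (e / 2, x); rewrite /= => /(_ (conj P1e (nbhs_singleton P2x))).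
by case.
Qed.
Lemma comb_sub {R : realType} {Z : lmodType R} (l : R) (u v u' v' : Z) :
  l *: (u - v) + (1 - l) *: (u' - v') = (l *: u + (1 - l) *: u') - (l *: v + (1 - l) *: v').
Proof. by rewrite !scalerBr opprD addrACA. Qed.

Lemma comb_same {R : realType} {Z : lmodType R} (l : R) (u : Z) :
  l *: u + (1 - l) *: u = u.
Proof. by rewrite -scalerDl addrC subrK scale1r. Qed.

Lemma separation {R : realType} {Z : tvsType R} (A : set Z) (z0 a0 : Z) :
  A a0 -> closed A -> convex_set A -> ~ A z0 ->
  exists g : Z -> R, in_dual g /\ exists2 d, 0 < d & forall a, A a -> g a + d <= g z0.
Proof.
move=> Aa0 cA cvA nAz.
have [B [cvB Bz BA]] := convex_nbhs_out cA nAz.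
have Bz0 : B z0 := nbhs_singleton Bz.
pose N := [set w : Z | exists a b, [/\ A a, B b & w = (a - a0) - (b - z0)]].
have Ncomb l x y : 0 <= l -> l <= 1 -> N x -> N y -> N (l *: x + (1 - l) *: y).
  move=> l0 l1 [a [b [Aa Bb ->]]] [a' [b' [Aa' Bb' ->]]].
  exists (l *: a + (1 - l) *: a'), (l *: b + (1 - l) *: b'); split.
  - exact: cvx_comb.
  - exact: cvx_comb.
  - by rewrite comb_sub !comb_sub !comb_same.
have N0 : N 0 by exists a0, z0; split => //; rewrite !subrr.
have NB b : B b -> N (z0 - b).
  by move=> Bb; exists a0, b; split => //; rewrite subrr sub0r opprB.
pose e := z0 - a0.
have Ne : ~ N e.
  move=> [a [b [Aa Bb eq]]]; apply: (BA b Bb).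
  suff -> : b = a by [].
  have id : (a - a0) - (b - z0) = (a - b) + (z0 - a0).
    by rewrite opprB [z0 - b]addrC addrACA [- a0 + z0]addrC.
  move: eq; rewrite id /e => H.
  have := congr1 (fun w => w - (z0 - a0)) H; rewrite /= subrr addrK => /eqP.
  by rewrite eq_sym subr_eq0 => /eqP ->.
have e0 : e != 0 by apply/eqP => e0; apply: Ne; rewrite e0.
pose S x := [set t : R | 0 < t /\ N (t^-1 *: x)].
pose p x := inf (S x).
have absN x : S x !=set0.
  have [s s0 Bs] := absorb_B x Bz.
  exists s^-1; split; first by rewrite invr_gt0.
  by rewrite invrK; have := NB _ Bs; rewrite opprB addrC subrK.
have Slb x : has_lbound (S x) by exists 0 => t [t0 _]; exact: ltW.
have p_le x t : 0 < t -> N (t^-1 *: x) -> p x <= t.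
  by move=> t0 Nt; apply: (ge_inf (Slb x)).
have p_ge0 x : 0 <= p x by apply: lb_le_inf (absN x) _ => t [t0 _]; exact: ltW.
have phom s x : 0 < s -> p (s *: x) <= s * p x.
  move=> s0; rewrite -ler_pdivrMl //.
  apply: lb_le_inf (absN x) _ => u [u0 Nu].
  rewrite ler_pdivrMl //; apply: p_le; first exact: mulr_gt0.
  by rewrite scalerA [s * u]mulrC invfM -mulrA mulVf ?gt_eqF // mulr1.
have psub x y : p (x + y) <= p x + p y.
  have H1 t : S y t -> p (x + y) - t <= p x.
    move=> [t0 Nt]; apply: lb_le_inf (absN x) _ => s [s0 Ns].
    rewrite lerBlDr; apply: p_le; first exact: addr_gt0.
    have st0 : 0 < s + t by exact: addr_gt0.
    have -> : (s + t)^-1 *: (x + y) =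
        (s / (s + t)) *: (s^-1 *: x) + (1 - s / (s + t)) *: (t^-1 *: y).
      have -> : 1 - s / (s + t) = t / (s + t).
        by rewrite -[1](divff (lt0r_neq0 st0)) -mulrBl [s + t]addrC addrK.
      rewrite !scalerA -!mulrA [_^-1 * s^-1]mulrC [_^-1 * t^-1]mulrC !mulrA.
      by rewrite !divff ?gt_eqF // !mul1r scalerDr.
    apply: Ncomb => //.
    - by rewrite divr_ge0 // ltW.
    - by rewrite ler_pdivrMr // mul1r lerDl ltW.
  rewrite [p x + _]addrC -lerBlDr.
  apply: lb_le_inf (absN y) _ => t St.
  have := H1 t St; rewrite lerBlDr => h; by rewrite lerBlDr [t + _]addrC.
have pe1 : 1 <= p e.
  apply: lb_le_inf (absN e) _ => u [u0 Nu]; rewrite leNgt; apply/negP => u1.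
  apply: Ne; have := Ncomb u _ _ (ltW u0) (ltW u1) Nu N0.
  by rewrite scaler0 addr0 scalerA divff ?gt_eqF // scale1r.
have seed t : t * 1 <= p (t *: e).
  rewrite mulr1; have [t0|t0] := leP t 0; first exact: le_trans t0 (p_ge0 _).
  have : p e <= t^-1 * p (t *: e).
    by rewrite -{1}[e](scale1r) -(mulVf (lt0r_neq0 t0)) -scalerA; apply: phom; rewrite invr_gt0.
  move=> H; have H2 : t * p e <= t * (t^-1 * p (t *: e)) by rewrite ler_pM2l.
  rewrite mulrA divff ?lt0r_neq0 // mul1r in H2.
  apply: le_trans H2; by rewrite ler_peMr // ltW.
have [g [glin gp ge]] := hahn_banach psub phom e0 seed.
have g0 : g 0 = 0.
  by have := glin 1 0 0; rewrite scaler0 add0r mul1r => /eqP; rewrite -subr_eq subrr eq_sym => /eqP.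
have gD x y : g (x + y) = g x + g y by have := glin 1 x y; rewrite scale1r mul1r.
have gZ a x : g (a *: x) = a * g x by have := glin a x 0; rewrite !addr0 g0 addr0.
have gN x : g (- x) = - g x by rewrite -scaleN1r gZ mulN1r.
have gB x y : g (x - y) = g x - g y by rewrite gD gN.
exists g; split.
  split; first exact: glin.
  move=> y; apply/(cvgrPdist_le _ _).2 => eps eps0.
  have W := nbhs_sym_shift Bz.
  have := nbhsT y (nbhs0Z (lt0r_neq0 eps0) W); apply: filterS.
  move=> _ [_ [v [Bpv Bmv] <-] <-].
  have gv1 : g v <= 1.
    apply: le_trans (gp v) _; apply: p_le; first exact: ltr01.
    by rewrite invr1 scale1r; have := NB _ Bmv; rewrite opprB addrC subrK.
  have gv2 : - g v <= 1.
    rewrite -gN; apply: le_trans (gp _) _; apply: p_le; first exact: ltr01.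
    by rewrite invr1 scale1r; have := NB _ Bpv; rewrite opprD addNKr.
  rewrite /= gD gZ opprD addNKr normrN normrM gtr0_norm //.
  apply: ler_piMr; first exact: ltW.
  by rewrite ler_norml gv1 andbT lerNl.
have [s s0 Bs] := absorb_B e Bz.
exists s => // a Aa.
have Nw : N ((a - a0) - ((z0 - s *: e) - z0)) by exists a, (z0 - s *: e).
have Nw1 : N (1^-1 *: ((a - a0) - ((z0 - s *: e) - z0))) by rewrite invr1 scale1r.
have := le_trans (gp _) (p_le _ _ ltr01 Nw1).
rewrite !gB gZ ge mulr1 => H.
have ge' : g z0 - g a0 = 1 by rewrite -gB.
lra.
Qed.

Lemma endgame {R : realType} (X : topologicalLmodType R) (Z : tvsType R)
  (f : X -> set Z) (x0 : X) (z0 : Z) (g : Z -> R) (al : R) :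
  in_dual g -> lsc_at (phi f g) x0 -> (al%:E < phi f g x0)%E -> - g z0 < al ->
  (\bigcap_(U in nbhs x0) closure (\bigcup_(x in U) f x)) z0 -> False.
Proof.
move=> [_ gc] lsc alt galt Hz.
have [V nV HV] := lsc al alt.
have cl := Hz V nV.
have nW : nbhs z0 [set z | - g z < al].
  have := (cvgrPdist_lt (g : Z -> R^o) (g z0)).1 (gc z0) (al + g z0).
  rewrite -subr_gt0 opprK in galt; move=> /(_ _ galt); apply: filterS => z /=.
  move=> h; have := ler_norm (g z0 - g z); rewrite -/(Order.le _ _) => h2.
  have := le_lt_trans h2 h; lra.
have [z [[x Vx fxz] Wz]] := cl _ nW.
have := HV x Vx; apply/negP; rewrite -leNgt.
have h : (phi f g x <= (- g z)%:E)%E by apply: ereal_inf_lbound; exists z.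
apply: le_trans h _; rewrite lee_fin; exact: ltW.
Qed.

Unset Implicit Arguments. Set Strict Implicit.

Theorem mainTheorem15 (R : realType) (X : topologicalLmodType R)
  (Z : tvsType R) (C : set Z) (f : X -> set Z) (x0 : X) :
  C !=set0 ->
  closed_convex_cone C ->
  (exists g : Z -> R, polar_cone C g /\ g <> (fun _ => 0)) ->
  (forall x, in_FZC C (f x)) ->
  convex_set (f x0) ->
  (forall g : Z -> R, polar_cone C g -> g <> (fun _ => 0) ->
     lsc_at (phi f g) x0) ->
  lower_lattice_sc_at f x0.
Proof.
move=> Cne [Ccl [Ccvx Ccone]] [g1 [pg1 g1n]] FZC cvx lsc z0 Hz.
apply: contrapT => nz.
have [[a0 Aa0]|A0] := pselect (f x0 !=set0); last first.
  have fx0 : f x0 = set0.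
    by apply/seteqP; split => // z fz; apply: A0; exists z.
  apply: (@endgame R X Z f x0 z0 g1 (- g1 z0 + 1)) => //.
  - by case: pg1.
  - exact: lsc.
  - by rewrite /phi fx0 image_set0 ereal_inf0 ltey.
  - by rewrite ltrDl.
have clA : closed (f x0) by rewrite (FZC x0); exact: closed_closure.
have [g [gd [d d0 gap]]] := separation Aa0 clA cvx nz.
have glin := gd.1.
have g0 : g 0 = 0.
  by have := glin 1 0 0; rewrite scaler0 add0r mul1r => /eqP; rewrite -subr_eq subrr eq_sym => /eqP.
have AC a c : f x0 a -> C c -> f x0 (a + c).
  move=> fa Cc; rewrite (FZC x0); apply: subset_closure; exists a => //; exists c => //.
have pg : polar_cone C g.
  split => // c Cc; rewrite leNgt; apply/negP => gc0.
  pose t := (g z0 - g a0) / g c.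
  have t0 : 0 <= t by rewrite divr_ge0 // ?ltW //; have := gap _ Aa0; lra.
  have := gap _ (AC _ _ Aa0 (Ccone t c t0 Cc)).
  rewrite [a0 + _]addrC glin /t -mulrA mulVf ?lt0r_neq0 // mulr1; lra.
have gn : g <> (fun _ => 0).
  move=> gz; have := gap _ Aa0; rewrite gz; lra.
apply: (@endgame R X Z f x0 z0 g (- g z0 + d / 2)) => //.
- exact: lsc.
- apply: (@lt_le_trans _ _ (- g z0 + d)%:E); first by rewrite lte_fin ltrD2l ltr_pdivrMr // ltr_pMr // ltr1n.
  apply: le_ereal_inf_tmp => _ [a fa <-]; rewrite lee_fin; have := gap _ fa; lra.
- by rewrite ltrDl divr_gt0.
Qed.
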